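(* Let $\mathbf v\in\mathbb Z^4$ be nonzero and $\mathcal A[\mathbf v]=\{\mathbf U\mathbf v:\mathbf U\in\mathcal A\}$. (1) If $\mathcal A[\mathbf v]$ contains an exceptional quadruple, then it contains elements $\mathbf v_1,\mathbf v_2$ with $L(\mathbf v_1)>0$ and $L(\mathbf v_2)<0$. (2) There exist orbits $\mathcal A[\mathbf v]$ containing more than one exceptional quadruple. (3) Exceptional quadruples $\mathbf a$ with $Q_{\mathcal D}(\mathbf a)=k$ exist only for $k\ge1$; for each $k\ge1$ there are only finitely many exceptional quadruples $\mathbf a$ with $Q_{\mathcal D}(\mathbf a)=k$, and all satisfy $H(\mathbf a)^2\le 2k^2$.
   Context: $Q_{\mathcal D}(a,b,c,d)=2(a^2+b^2+c^2+d^2)-(a+b+c+d)^2$; $H(\mathbf a)=(a^2+b^2+c^2+d^2)^{1/2}$; $L(\mathbf a)=a+b+c+d$; $|\mathbf a|=|a|+|b|+|c|+|d|$. $\mathbf S_i$ ($i=1,\dots,4$) is the integer matrix replacing the $i$-th coordinate $a_i$ of a quadruple by $2\sum_{j\ne i}a_j-a_i$, other coordinates fixed; the Apollonian group $\mathcal A$ is the subgroup of $GL(4,\mathbb Z)$ they generate. An integer quadruple is reduced if no $\mathbf S_i$ strictly decreases $|\cdot|$. A reduced quadruple ordered as $a\le b\le c\le d$ with $L\ge0$ is exceptional if $a+b+c\le 0<d$ (and a root quadruple if $a+b+c\ge d>0$); a reduced quadruple with $L<0$ is exceptional iff $(-d,-c,-b,-a)$ is. *)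

(* Defs.v *)
From mathcomp Require Import all_boot all_order all_algebra.
Set Implicit Arguments. Unset Strict Implicit. Unset Printing Implicit Defensive.
Import Order.TTheory GRing.Theory Num.Theory.
Local Open Scope ring_scope.

Definition quad := 'cV[int]_4.

Definition QD (a : quad) : int :=
  2 * (\sum_(i < 4) (a i 0) ^+ 2) - (\sum_(i < 4) a i 0) ^+ 2.

Definition Hsq (a : quad) : int := \sum_(i < 4) (a i 0) ^+ 2.

Definition Lsum (a : quad) : int := \sum_(i < 4) a i 0.

Definition norm1 (a : quad) : int := \sum_(i < 4) `|a i 0|.

(* S_i : replaces a_i by 2 * sum_{j <> i} a_j - a_i, other coordinates fixed *)
Definition Smx (i : 'I_4) : 'M[int]_4 :=
  \matrix_(r, c) (if r == i then (if c == i then -1 else 2)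
                  else (r == c)%:R).

Inductive apollonian : 'M[int]_4 -> Prop :=
| apollonian1 : apollonian 1%:M
| apollonianS i : apollonian (Smx i)
| apollonianM U V : apollonian U -> apollonian V -> apollonian (U *m V)
| apollonianV U : apollonian U -> apollonian (invmx U).

Definition in_Aorbit (v w : quad) : Prop :=
  exists U, apollonian U /\ w = U *m v.

Definition reduced (a : quad) : Prop :=
  forall i : 'I_4, ~ (norm1 (Smx i *m a) < norm1 a).

Definition sorted_coords (a : quad) : seq int :=
  sort (fun x y : int => x <= y) [seq a i 0 | i <- enum 'I_4].

Definition exceptional_nonneg (a : quad) : Prop :=
  let s := sorted_coords a in
  reduced a /\ 0 <= Lsum a /\ s`_0 + s`_1 + s`_2 <= 0 /\ 0 < s`_3.

(* general case: for L < 0, a is exceptional iff (-d,-c,-b,-a) is,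
   i.e. iff the negated quadruple (same multiset as (-d,-c,-b,-a)) is *)
Definition exceptional (a : quad) : Prop :=
  if 0 <= Lsum a then exceptional_nonneg a
  else reduced a /\ exceptional_nonneg (- a).

(* Main.v *)
Require Import Defs.
From mathcomp Require Import all_boot all_order all_algebra.
From mathcomp Require Import zify ring lra.
Import Order.TTheory GRing.Theory Num.Theory.
Local Open Scope ring_scope.

Definition o0 : 'I_4 := @Ordinal 4 0 isT.
Definition o1 : 'I_4 := @Ordinal 4 1 isT.
Definition o2 : 'I_4 := @Ordinal 4 2 isT.
Definition o3 : 'I_4 := @Ordinal 4 3 isT.

Lemma sum4 (F : 'I_4 -> int) : \sum_(i < 4) F i = F o0 + F o1 + F o2 + F o3.
Proof.
rewrite !big_ord_recl big_ord0 addr0 !addrA.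
congr (_ + _ + _ + _); congr F; exact: val_inj.
Qed.

Lemma enum4 : enum 'I_4 = [:: o0; o1; o2; o3].
Proof. by apply: (inj_map val_inj); rewrite val_enum_ord. Qed.

Lemma SmxE i (a : quad) r : (Smx i *m a) r 0 =
  if r == i then 2 * Lsum a - 3 * a i 0 else a r 0.
Proof.
rewrite mxE /Lsum (bigD1 i) //= [in RHS](bigD1 i) //= !mxE eqxx.
case: eqP => [->|/eqP ne].
  idtac.
  under eq_bigr => c /negbTE hc do rewrite mxE eqxx hc.
  rewrite -mulr_sumr. ring.
rewrite mul0r add0r (bigD1 r) /=; last by rewrite ne.
rewrite mxE (negbTE ne) eqxx mul1r big1 ?addr0 // => c /andP[_ hc].
by rewrite mxE (negbTE ne) eq_sym (negbTE hc) mul0r.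
Qed.




Lemma LsumS i (a : quad) : Lsum (Smx i *m a) = 3 * Lsum a - 4 * a i 0.
Proof.
have h : Lsum a = a i 0 + \sum_(r < 4 | r != i) a r 0 by rewrite /Lsum (bigD1 i).
rewrite {1}/Lsum (bigD1 i) //= SmxE eqxx.
under eq_bigr => r hr do rewrite SmxE (negbTE hr).
rewrite h; ring.
Qed.

Lemma norm1S i (a : quad) :
  norm1 (Smx i *m a) = norm1 a - `|a i 0| + `|2 * Lsum a - 3 * a i 0|.
Proof.
have h : norm1 a = `|a i 0| + \sum_(r < 4 | r != i) `|a r 0| by rewrite /norm1 (bigD1 i).
rewrite {1}/norm1 (bigD1 i) //= SmxE eqxx.
under eq_bigr => r hr do rewrite SmxE (negbTE hr).
rewrite h; ring.
Qed.

Lemma reducedP (a : quad) :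
  reduced a <-> forall i, `|a i 0| <= `|2 * Lsum a - 3 * a i 0|.
Proof.
split => H i; have := H i; rewrite ?norm1S; lia.
Qed.

Lemma LsumN (a : quad) : Lsum (- a) = - Lsum a.
Proof. by rewrite /Lsum; under eq_bigr do rewrite mxE; rewrite sumrN. Qed.

Lemma HsqN (a : quad) : Hsq (- a) = Hsq a.
Proof. by rewrite /Hsq; under eq_bigr do rewrite mxE sqrrN. Qed.

Lemma QDN (a : quad) : QD (- a) = QD a.
Proof.
rewrite /QD -/(Hsq (-a)) -/(Hsq a) -/(Lsum (-a)) -/(Lsum a) HsqN LsumN.
by rewrite sqrrN.
Qed.

Lemma exc_info (u : quad) : exceptional_nonneg u ->
  exists y0 y1 y2 y3,
    perm_eq [:: y0; y1; y2; y3] [:: u o0 0; u o1 0; u o2 0; u o3 0] /\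
    y0 + y1 + y2 <= 0 /\ 0 < y3 /\ 0 <= Lsum u.
Proof.
rewrite /exceptional_nonneg /sorted_coords enum4 /=.
set l := [:: _; _; _; _].
have hp := permEl (perm_sort (fun x y : int => x <= y) l).
have hs : size (sort (fun x y : int => x <= y) l) = 4%N by rewrite size_sort.
move: hp hs; set s := sort _ l; case: s => [|y0 [|y1 [|y2 [|y3 [|? ?]]]]] //= hp _ [_ [hL [h1 h2]]].
by exists y0, y1, y2, y3.
Qed.

Lemma perm_sum4 (F : int -> int) (y0 y1 y2 y3 x0 x1 x2 x3 : int) :
  perm_eq [:: y0; y1; y2; y3] [:: x0; x1; x2; x3] ->
  F y0 + F y1 + F y2 + F y3 = F x0 + F x1 + F x2 + F x3.
Proof.
move=> hp; have : \sum_(y <- [:: y0; y1; y2; y3]) F y = \sum_(y <- [:: x0; x1; x2; x3]) F y by apply: perm_big.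
by rewrite !big_cons big_nil !addr0 !addrA.
Qed.

Lemma perm_mem4 (y0 y1 y2 y3 x0 x1 x2 x3 : int) :
  perm_eq [:: y0; y1; y2; y3] [:: x0; x1; x2; x3] ->
  y3 = x0 \/ y3 = x1 \/ y3 = x2 \/ y3 = x3.
Proof.
move=> hp; have : y3 \in [:: x0; x1; x2; x3] by rewrite -(perm_mem hp) !inE eqxx !orbT.
by rewrite !inE => /or4P [/eqP|/eqP|/eqP|/eqP]; auto.
Qed.

Lemma Lsum4 (u : quad) : Lsum u = u o0 0 + u o1 0 + u o2 0 + u o3 0.
Proof. by rewrite /Lsum sum4. Qed.
Lemma Hsq4 (u : quad) : Hsq u = u o0 0 ^+ 2 + u o1 0 ^+ 2 + u o2 0 ^+ 2 + u o3 0 ^+ 2.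
Proof. by rewrite /Hsq sum4. Qed.

Lemma posneg (u : quad) : exceptional_nonneg u ->
  (0 < Lsum u \/ exists j, 0 < Lsum (Smx j *m u)) /\
  exists j, Lsum (Smx j *m u) < 0.
Proof.
move=> /exc_info [y0 [y1 [y2 [y3 [hp [h1 [h2 h3]]]]]]].
have hs := perm_sum4 id _ _ _ _ _ _ _ _ hp; have hm := perm_mem4 _ _ _ _ _ _ _ _ hp.
rewrite /= in hs; rewrite Lsum4 in h3 *.
split.
  have [hpos|hz] := ltrP 0 (u o0 0 + u o1 0 + u o2 0 + u o3 0); first by left.
  right.
  have : u o0 0 < 0 \/ u o1 0 < 0 \/ u o2 0 < 0 \/ u o3 0 < 0 by lia.
  case=> [h|[h|[h|h]]]; [exists o0|exists o1|exists o2|exists o3];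
    rewrite LsumS Lsum4; lia.
case: hm => [h|[h|[h|h]]]; [exists o0|exists o1|exists o2|exists o3];
  rewrite LsumS Lsum4; lia.
Qed.

Lemma qd_info (u : quad) : exceptional_nonneg u -> 1 <= QD u /\ Hsq u <= QD u.
Proof.
move=> /exc_info [y0 [y1 [y2 [y3 [hp [h1 [h2 h3]]]]]]].
have hs := perm_sum4 id _ _ _ _ _ _ _ _ hp.
have hq := perm_sum4 (fun x => x ^+ 2) _ _ _ _ _ _ _ _ hp.
rewrite /= in hs hq.
rewrite /QD -/(Hsq u) -/(Lsum u) Hsq4 Lsum4 -hq -hs.
rewrite Lsum4 -hs in h3.
rewrite !expr2 in hq *. nia.
Qed.

Lemma orbit_S v w i : in_Aorbit v w -> in_Aorbit v (Smx i *m w).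
Proof.
case=> U [hU ->]; exists (Smx i *m U); split; last by rewrite mulmxA.
by apply: apollonianM => //; apply: apollonianS.
Qed.

Lemma part1 (v : quad) : (exists w, in_Aorbit v w /\ exceptional w) ->
  exists v1 v2, in_Aorbit v v1 /\ in_Aorbit v v2 /\ 0 < Lsum v1 /\ Lsum v2 < 0.
Proof.
case=> w [hw]; rewrite /exceptional.
case: ifP => hL.
  move=> /posneg [[hp|[j hj]] [k hk]].
  - by exists w, (Smx k *m w); split => //; split => //; apply: orbit_S.
  - by exists (Smx j *m w), (Smx k *m w); split; [apply: orbit_S|split => //; apply: orbit_S].
move=> [_ /posneg [[hp|[j hj]] [k hk]]].
- exists (Smx k *m w), w; split; first exact: orbit_S.
  rewrite LsumN oppr_gt0 in hp; rewrite mulmxN LsumN oppr_lt0 in hk; split => //; by split.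
- exists (Smx k *m w), (Smx j *m w); split; first exact: orbit_S.
  split; first exact: orbit_S.
  rewrite mulmxN LsumN oppr_lt0 in hk; rewrite mulmxN LsumN oppr_gt0 in hj; by split.
Qed.

Lemma part3 (a : quad) : exceptional a -> 1 <= QD a /\ Hsq a <= QD a.
Proof.
rewrite /exceptional; case: ifP => _; first exact: qd_info.
by move=> [_ /qd_info]; rewrite QDN HsqN.
Qed.

Lemma le_sq (x : int) : x <= x * x /\ - x <= x * x.
Proof. have [h|h] := lerP x 0; nia. Qed.

Lemma part3fin (k : int) : 1 <= k ->
  exists s : seq quad, forall a, exceptional a -> QD a = k -> a \in s.
Proof.
move=> hk.
exists [seq (\col_j ((g j : nat)%:Z - k) : quad) | g : {ffun 'I_4 -> 'I_(2 * absz k).+1}].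
move=> a /part3 [_ h] hq; rewrite hq Hsq4 in h.
have hb : forall j, -k <= a j 0 <= k.
  move=> j; have : j = o0 \/ j = o1 \/ j = o2 \/ j = o3.
    case: j => [[|[|[|[|//]]]] Hj]; [left|right;left|right;right;left|right;right;right];
      exact: val_inj.
  rewrite !expr2 in h. have q0 := le_sq (a o0 0); have q1 := le_sq (a o1 0).
  have q2 := le_sq (a o2 0); have q3 := le_sq (a o3 0).
  case=> [->|[->|[->|->]]]; lia.
apply/imageP; exists [ffun j => inord (absz (a j 0 + k))] => //.
apply/matrixP => j l; rewrite (ord1 l) !mxE ffunE inordK; have := hb j; move: (a j 0) => x; lia.
Qed.

Definition w1 : quad := \col_i ([:: -1; -1; 0; 1]`_i).
Definition w2' : quad := \col_i ([:: 1; -1; 0; 1]`_i).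

Lemma ord4_cases (P : 'I_4 -> Prop) : P o0 -> P o1 -> P o2 -> P o3 -> forall i, P i.
Proof.
move=> h0 h1 h2 h3 [[|[|[|[|//]]]] Hi].
- by rewrite (_ : Ordinal Hi = o0) //; apply: val_inj.
- by rewrite (_ : Ordinal Hi = o1) //; apply: val_inj.
- by rewrite (_ : Ordinal Hi = o2) //; apply: val_inj.
- by rewrite (_ : Ordinal Hi = o3) //; apply: val_inj.
Qed.

Lemma w2E : Smx o0 *m w1 = w2'.
Proof.
apply/matrixP => i j; rewrite (ord1 j) SmxE Lsum4 /w1 /w2' !mxE /=.
move: i; apply: ord4_cases. all: by [].
Qed.

Lemma exc_w2 : exceptional w2'.
Proof.
rewrite /exceptional Lsum4 /w2' !mxE /=.
split.
  apply/reducedP; rewrite Lsum4 !mxE /=.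
  by apply: ord4_cases; rewrite !mxE.
rewrite Lsum4 /sorted_coords enum4 /= !mxE /=.
by vm_compute.
Qed.

Lemma exc_w1 : exceptional w1.
Proof.
rewrite /exceptional Lsum4 /w1 !mxE /=.
split.
  apply/reducedP; rewrite Lsum4 !mxE /=.
  by apply: ord4_cases; rewrite !mxE.
split.
  apply/reducedP; rewrite Lsum4 !mxE /=.
  by apply: ord4_cases; rewrite !mxE.
rewrite Lsum4 /sorted_coords enum4 /= !mxE /=.
by vm_compute.
Qed.

Lemma part2 : exists v : quad, v != 0 /\
     exists w1 w2, w1 != w2 /\ in_Aorbit v w1 /\ in_Aorbit v w2 /\
                   exceptional w1 /\ exceptional w2.
Proof.
exists w1; split.
  apply/negP => /eqP /matrixP /(_ o0 0); rewrite !mxE //.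
exists w1, w2'; split.
  apply/negP => /eqP /matrixP /(_ o0 0); rewrite !mxE //.
split; first by exists 1%:M; split; [exact: apollonian1 | rewrite mul1mx].
split; first by exists (Smx o0); split; [exact: apollonianS | rewrite w2E].
by split; [exact: exc_w1 | exact: exc_w2].
Qed.

Theorem theorem3p4 :
  (* (1) *)
  (forall v : quad, v != 0 ->
     (exists w, in_Aorbit v w /\ exceptional w) ->
     exists v1 v2, in_Aorbit v v1 /\ in_Aorbit v v2 /\
                   0 < Lsum v1 /\ Lsum v2 < 0) /\
  (* (2) *)
  (exists v : quad, v != 0 /\
     exists w1 w2, w1 != w2 /\ in_Aorbit v w1 /\ in_Aorbit v w2 /\
                   exceptional w1 /\ exceptional w2) /\
  (* (3) *)
  (forall (k : int) (a : quad), exceptional a -> QD a = k -> 1 <= k) /\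
  (forall k : int, 1 <= k ->
     (exists s : seq quad, forall a, exceptional a -> QD a = k -> a \in s) /\
     (forall a : quad, exceptional a -> QD a = k -> Hsq a <= 2 * k ^+ 2)).
Proof.
split; first by move=> v _; exact: part1.
split; first exact: part2.
split.
  by move=> k a /part3 [h _] <-.
move=> k hk; split; first exact: part3fin.
move=> a /part3 [_ h] hq; rewrite hq in h.
apply: (le_trans h); rewrite expr2; nia.
Qed.
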